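(* Let $R$ be a $*$-regular ring. Then $R$ is strongly $J$-$*$-clean if and only if $R$ is Boolean.
   Context: All rings are associative with identity. A $*$-ring is a ring $R$ with an involution $*$, i.e. a map $a\mapsto a^*$ with $(a+b)^*=a^*+b^*$, $(ab)^*=b^*a^*$, $(a^* )^*=a$. A projection is an element $e$ with $e^2=e=e^*$. A $*$-ring $R$ is $*$-regular if it is von Neumann regular and the involution is proper; equivalently, for every $x\in R$ there exists a projection $p$ with $xR=pR$. $J(R)$ denotes the Jacobson radical. $R$ is strongly $J$-$*$-clean if every $a\in R$ can be written $a=e+u$ with $e$ a projection, $u\in J(R)$ and $ae=ea$. A ring is Boolean if every element is idempotent. *)

(* Defs.v *)
From mathcomp Require Import all_boot all_algebra.
Set Implicit Arguments. Unset Strict Implicit. Unset Printing Implicit Defensive.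
Import GRing.Theory.
Local Open Scope ring_scope.

Definition is_involution (R : pzRingType) (star : R -> R) : Prop :=
  [/\ forall a b, star (a + b) = star a + star b,
      forall a b, star (a * b) = star b * star a
    & forall a, star (star a) = a].

Definition is_projection (R : pzRingType) (star : R -> R) (e : R) : Prop :=
  e * e = e /\ star e = e.

Definition vn_regular (R : pzRingType) : Prop :=
  forall x : R, exists y : R, x * y * x = x.

Definition proper_involution (R : pzRingType) (star : R -> R) : Prop :=
  forall x : R, star x * x = 0 -> x = 0.

Definition star_regular (R : pzRingType) (star : R -> R) : Prop :=
  vn_regular R /\ proper_involution star.

Definition left_ideal (R : pzRingType) (I : R -> Prop) : Prop :=
  [/\ I 0, forall x y, I x -> I y -> I (x + y)
    & forall r x, I x -> I (r * x)].

Definition maximal_left_ideal (R : pzRingType) (M : R -> Prop) : Prop :=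
  [/\ left_ideal M, ~ M 1 &
      forall I : R -> Prop, left_ideal I -> ~ I 1 ->
        (forall x, M x -> I x) -> forall x, I x -> M x].

Definition jacobson (R : pzRingType) (x : R) : Prop :=
  forall M : R -> Prop, maximal_left_ideal M -> M x.

Definition strongly_J_star_clean (R : pzRingType) (star : R -> R) : Prop :=
  forall a : R, exists e u : R,
    [/\ is_projection star e, jacobson u, a = e + u & a * e = e * a].

Definition boolean_ring (R : pzRingType) : Prop := forall x : R, x * x = x.

(* Main.v *)
Require Import Defs.
From mathcomp Require Import all_boot all_algebra.
From mathcomp Require Import boolp classical_sets.
Import GRing.Theory.
Local Open Scope classical_set_scope.
Local Open Scope ring_scope.

Section Aux.
Variable R : pzRingType.

Lemma exists_max (I : R -> Prop) : left_ideal I -> ~ I 1 ->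
  exists M, maximal_left_ideal M /\ (forall x, I x -> M x).
Proof.
move=> [I0 ID IM] I1.
pose P := fun J : set R => J = set0 \/ (left_ideal J /\ (forall x, I x -> J x) /\ ~ J 1).
have [A [PA Amax]] : exists A, P A /\ forall B, A `<` B -> ~ P B.
  apply: Zorn_bigcup => F FP Ftot.
  have [[X FX Xne]|none] := pselect (exists2 X, F X & X <> set0); last first.
    left; apply/seteqP; split => // x [X FX Xx].
    have : X = set0 by apply: contrapT => H; apply: none; exists X.
    by move=> E; rewrite E in Xx.
  have idX Y : F Y -> Y <> set0 -> left_ideal Y /\ (forall x, I x -> Y x) /\ ~ Y 1.
    by move=> FY; case: (FP _ FY).
  right; have [[X0 XD XM] [XI X1]] := idX X FX Xne.
  split; [split|split].
  - by exists X.
  - move=> x y [Y FY Yx] [Z FZ Zy].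
    have YZne W : F W -> W <> set0 -> left_ideal W by move=> ? ?; case: (idX W).
    case: (Ftot _ _ FY FZ) => [YZ|ZY].
    + have Zne : Z <> set0 by move=> E; rewrite E in Zy.
      have [_ ZD _] := YZne Z FZ Zne.
      by exists Z => //; apply: ZD => //; apply: YZ.
    + have Yne : Y <> set0 by move=> E; rewrite E in Yx.
      have [_ YD _] := YZne Y FY Yne.
      by exists Y => //; apply: YD => //; apply: ZY.
  - move=> r x [Y FY Yx]; have Yne : Y <> set0 by move=> E; rewrite E in Yx.
    have [[_ _ YM] _] := idX Y FY Yne.
    by exists Y => //; apply: YM.
  - by move=> x Ix; exists X => //; apply: XI.
  - move=> [Y FY Y1]; have Yne : Y <> set0 by move=> E; rewrite E in Y1.
    by have [_ [_ ]] := idX Y FY Yne.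
have PI : P I by right; split; [by split|split].
case: PA => [A0|[Aid [AI A1]]].
  exfalso; apply: (Amax I) => //; rewrite A0; split; first by move=> x [].
  by move=> H; apply: (H 0 I0).
exists A; split => //; split => // J Jid J1 AJ x Jx.
apply: contrapT => Ax; apply: (Amax J).
  split; first by move=> y Ay; apply: AJ.
  by move=> E; apply: Ax; apply: E.
by right; split => //; split => // y Iy; apply: AJ; apply: AI.
Qed.

Lemma jac_regular (u : R) : vn_regular R -> jacobson u -> u = 0.
Proof.
move=> reg Ju; have [y uyu] := reg u.
pose f := y * u.
have Jf : jacobson f by move=> M Mm; case: (Mm) => [[_ _ MM] _ _]; apply: MM; apply: Ju.
have ff : f * f = f by rewrite /f -mulrA [u * (y * u)]mulrA uyu.
pose I := fun r : R => exists s, r = s * (1 - f).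
have Iid : left_ideal I.
  split; first by exists 0; rewrite mul0r.
  - by move=> a b [s ->] [t ->]; exists (s + t); rewrite mulrDl.
  - by move=> r a [s ->]; exists (r * s); rewrite mulrA.
have I1 : I 1.
  apply: contrapT => nI1; have [M [Mm IM]] := @exists_max I Iid nI1.
  case: (Mm) => [[_ MD _] M1 _]; apply: M1.
  have -> : (1 : R) = (1 - f) + f by rewrite subrK.
  apply: MD; last exact: Jf.
  by apply: IM; exists 1; rewrite mul1r.
have [s hs] := I1.
have f0 : f = 0.
  have : f = s * (1 - f) * f by rewrite -hs mul1r.
  by rewrite -mulrA mulrBl mul1r ff subrr mulr0.
by rewrite -uyu -mulrA -/f f0 mulr0.
Qed.

End Aux.

Theorem corollary2p9 (R : pzRingType) (star : R -> R) :
  is_involution star -> star_regular star ->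
  (strongly_J_star_clean star <-> boolean_ring R).
Proof.
move=> [sD sM sK] [reg prop]; split.
  move=> cl x; have [e [u [[ee _] Ju -> _]]] := cl x.
  by rewrite (@jac_regular R u reg Ju) addr0.
move=> bool a.
have anti (x y : R) : x * y + y * x = 0.
  have := bool (x + y); rewrite mulrDl !mulrDr !bool.
  move=> E; apply: (addrI x); apply: (addIr y); rewrite addr0 -[RHS]E.
  by rewrite !addrA.
have two (x : R) : x + x = 0 by have := anti x x; rewrite bool.
have comm (x y : R) : x * y = y * x.
  by move/eqP: (anti x y); rewrite addr_eq0 => /eqP ->; apply/eqP; rewrite eq_sym -addr_eq0 two.
have s0 : star 0 = 0.
  by have h := sD 0 0; rewrite addr0 in h; apply: (addrI (star 0)); rewrite addr0 -h.
have sN (x : R) : star (- x) = - star x.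
  by apply/eqP; rewrite -subr_eq0 opprK -sD addNr s0.
have s1 : star 1 = 1.
  by have := congr1 star (esym (mulr1 (star 1))); rewrite sM sK mulr1.
have key (p : R) : p = p * star p.
  pose q := star p; pose z := p * (1 - q).
  have sz : star z = (1 - p) * q by rewrite /z sM sD sN s1 /q sK.
  have : star z * z = 0.
    rewrite sz /z -mulrA [q * _]mulrA [q * p]comm -!mulrA mulrA.
    by rewrite mulrBl mul1r bool subrr mul0r.
  move=> /prop /eqP; rewrite /z mulrBr mulr1 subr_eq0 => /eqP {1}->.
  by [].
have sa : star a = a.
  by rewrite [RHS]key {1}(key (star a)) sK comm.
exists a, 0; split.
- by split; [apply: bool | exact: sa].
- by move=> M [[M0 _ _] _ _].
- by rewrite addr0.
- by [].
Qed.
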